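(* Assume hypotheses (A) and (B) and that $p_{ij}=p<1/(d-1)$ for all $i\ne j$ in $\{1,\dots,d\}$. Let $q=p/(1-(d-2)p)$ and, for $\gamma\in\mathbb{R}^d$ with all $\gamma_j>0$, $$\Sigma(\gamma_1,\dots,\gamma_d)=\sum_{j=1}^d\frac{\max_{1\le i\le d}\log(1+q\gamma_i)-\log(1+q\gamma_j)}{\log(1+\gamma_j)-\log(1+q\gamma_j)}.$$ Then $\gamma=(\gamma_1,\dots,\gamma_d)\in\Gamma$ if and only if $\gamma_i>0$ for all $i$ and $\Sigma(\gamma_1,\dots,\gamma_d)<1$.
   Context: Jackson network with $d$ queues: arrival rates $\lambda_i\ge0$, service rates $\mu_i>0$, routing matrix $P=(p_{ij})_{i,j=1}^d$ nonnegative with $p_{ii}=0$, $\sum_jp_{ij}\le1$, $p_{i0}=1-\sum_jp_{ij}$. Hypothesis (A): the jump-rate kernel on $\mathbb{Z}^d$ (jumps $+\epsilon^i$ at rate $\lambda_i$, $-\epsilon^i$ at rate $\mu_ip_{i0}$, $\epsilon^j-\epsilon^i$ at rate $\mu_ip_{ij}$) is irreducible (equivalently spectral radius of $P$ $<1$ and for every $i$ some $\lambda_jp^{(n)}_{ji}>0$); then the traffic equations $\nu_j=\lambda_j+\sum_i\nu_ip_{ij}$ have a unique solution with $\nu_i>0$. Hypothesis (B): $\nu_i<\mu_i$ for all $i$. $Q_{ij}$: probability that the chain on $\{0,\dots,d\}$ with transitions $p_{ij}$ ($0$ absorbing) started at $i$ ever visits $j$ (time $0$ included); in the present setting $Q_{ij}=q$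 for $i\ne j$. For $\gamma\in\mathbb{R}_+^d$, $\overrightarrow{\gamma_i}$ has components $\gamma_i^j=\log(1+Q_{ji}\gamma_i)$; $\Gamma$ is the set of $\gamma\in\mathbb{R}_+^d$ such that for every $i$ and nonzero $v\in\mathbb{R}_+^d$ with $v^i=0$, $\overrightarrow{\gamma_i}\cdot v<\max_j\overrightarrow{\gamma_j}\cdot v$. *)

(* Defs.v *)
From HB Require Import structures.
From mathcomp Require Import all_boot all_order all_algebra.
From mathcomp Require Import all_classical all_reals all_analysis.
Set Implicit Arguments. Unset Strict Implicit. Unset Printing Implicit Defensive.
Import Order.TTheory GRing.Theory Num.Theory.
Import numFieldNormedType.Exports.
Local Open Scope ring_scope.

Section Jackson.
Variables (R : realType) (d : nat).

(* p_{i0} = 1 - sum_j p_{ij} : probability of leaving the network from i *)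
Definition exit_prob (P : 'M[R]_d) (i : 'I_d) : R := 1 - \sum_(j < d) P i j.

Definition routing_matrix (P : 'M[R]_d) : Prop :=
  (forall i j, 0 <= P i j) /\ (forall i, P i i = 0) /\
  (forall i, \sum_(j < d) P i j <= 1).

Definition unitv (i : 'I_d) : 'rV[int]_d := delta_mx 0 i.

(* v is an increment with positive jump rate for the kernel of hypothesis (A):
   +e^i at rate lambda_i, -e^i at rate mu_i p_{i0},
   e^j - e^i at rate mu_i p_{ij}. *)
Definition pos_rate_jump (lam mu : 'I_d -> R) (P : 'M[R]_d) (v : 'rV[int]_d)
  : Prop :=
  (exists i, v = unitv i /\ 0 < lam i) \/
  (exists i, v = - unitv i /\ 0 < mu i * exit_prob P i) \/
  (exists i j, i != j /\ v = unitv j - unitv i /\ 0 < mu i * P i j).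

(* Hypothesis (A): the jump kernel on Z^d is irreducible: from any x one can
   reach any y through finitely many jumps of positive rate. *)
Definition hypA (lam mu : 'I_d -> R) (P : 'M[R]_d) : Prop :=
  forall x y : 'rV[int]_d, exists s : seq 'rV[int]_d,
    {in s, forall v, pos_rate_jump lam mu P v} /\ y = x + \sum_(v <- s) v.

Definition traffic (lam : 'I_d -> R) (P : 'M[R]_d) (nu : 'I_d -> R) : Prop :=
  forall j, nu j = lam j + \sum_(i < d) nu i * P i j.

(* Hypothesis (B): the (unique, under (A)) solution nu of the traffic
   equations satisfies nu_i < mu_i. *)
Definition hypB (lam mu : 'I_d -> R) (P : 'M[R]_d) : Prop :=
  exists nu, traffic lam P nu /\ forall i, nu i < mu i.

(* hit_within P n i j = probability that the chain on {0,...,d} with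
   transitions p_{ij} (0 absorbing) started at i visits j at some time
   in {0,...,n}. *)
Fixpoint hit_within (P : 'M[R]_d) (n : nat) (i j : 'I_d) : R :=
  if i == j then 1 else
  match n with
  | 0 => 0
  | n'.+1 => \sum_(k < d) P i k * hit_within P n' k j
  end.

(* Q_{ij}: probability to ever visit j starting from i (time 0 included),
   the limit of the nondecreasing sequence hit_within P n i j. *)
Definition Qhit (P : 'M[R]_d) (i j : 'I_d) : R :=
  limn (fun n => hit_within P n i j).

Definition gvec (P : 'M[R]_d) (gamma : 'I_d -> R) (i : 'I_d) : 'I_d -> R :=
  fun j => ln (1 + Qhit P j i * gamma i).

Definition dotR (u v : 'I_d -> R) : R := \sum_(k < d) u k * v k.

Definition GammaSet (P : 'M[R]_d) (gamma : 'I_d -> R) : Prop :=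
  (forall k, 0 <= gamma k) /\
  forall (i : 'I_d) (v : 'I_d -> R),
    (forall k, 0 <= v k) -> (exists k, v k != 0) -> v i = 0 ->
    dotR (gvec P gamma i) v < \big[Num.max/0]_(j < d) dotR (gvec P gamma j) v.

Definition SigmaF (q : R) (gamma : 'I_d -> R) : R :=
  \sum_(j < d)
    ((\big[Num.max/0]_(i < d) ln (1 + q * gamma i)) - ln (1 + q * gamma j)) /
    (ln (1 + gamma j) - ln (1 + q * gamma j)).

End Jackson.

(* Main.v *)
Require Import Defs.
From HB Require Import structures.
From mathcomp Require Import all_boot all_order all_algebra.
From mathcomp Require Import all_classical all_reals all_analysis.
From mathcomp Require Import ring lra.
Import Order.TTheory GRing.Theory Num.Theory.
Import numFieldNormedType.Exports.
Local Open Scope ring_scope.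
Local Open Scope classical_set_scope.

Section Q.
Variables (R : realType) (d : nat) (P : 'M[R]_d) (p : R).
Hypothesis d2 : (2 <= d)%N.
Hypothesis P0 : forall i, P i i = 0.
Hypothesis Pp : forall i j : 'I_d, i != j -> P i j = p.
Let r := (d - 2)%:R * p.
Let q := p / (1 - r).
Hypothesis r1 : r < 1.
Hypothesis p0 : 0 <= p.

Lemma sum_step (i j : 'I_d) (h : R) : i != j ->
  \sum_(k < d) P i k * (if k == j then 1 else h) = p + r * h.
Proof.
move=> ij.
have E : forall k, P i k * (if k == j then 1 else h) =
   p * h + ((k == j)%:R * (p - p * h)) - ((k == i)%:R * (p * h)).
  move=> k; case: (eqVneq k j) => [->|kj].
    rewrite Pp // eq_sym (negbTE ij) /=; ring.
  case: (eqVneq k i) => [->|ki]; first by rewrite P0 /=; ring.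
  by rewrite Pp 1?eq_sym //=; ring.
rewrite (eq_bigr _ (fun k _ => E k)) sumrB big_split /= sumr_const card_ord.
have S : forall (c : R) (l : 'I_d), \sum_(k < d) (k == l)%:R * c = c.
  move=> c l; rewrite (bigD1 l) //= big1 ?eqxx; first by rewrite mul1r addr0.
  by move=> k /negbTE ->; rewrite mul0r.
rewrite !S /r natrB // -mulr_natl; ring.
Qed.

Lemma hit_formula n (i j : 'I_d) :
  hit_within P n i j = if i == j then 1 else q - q * r ^+ n.
Proof.
elim: n i => [|n IH] i /=.
  by case: ifP => //; rewrite expr0 mulr1 subrr.
case: (eqVneq i j) => // ij.
under eq_bigr do rewrite IH.
rewrite sum_step //.
have h : 1 - r != 0 by rewrite subr_eq0; apply/eqP => e; move: r1; rewrite -e ltxx.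
by rewrite /q exprS; field.
Qed.

Lemma Qhit_formula (i j : 'I_d) : Qhit P i j = if i == j then 1 else q.
Proof.
rewrite /Qhit; under eq_fun do rewrite hit_formula.
case: (eqVneq i j) => _.
  by apply: cvg_lim => //; exact: cvg_cst.
apply: cvg_lim => //.
have r0 : 0 <= r.
  by rewrite /r; apply: mulr_ge0.
have H : (fun n => q - q * r ^+ n) @ \oo --> q - q * 0.
  apply: cvgB; first exact: cvg_cst.
  apply: cvgMr; apply: cvg_expr.
  by rewrite ger0_norm.
by rewrite mulr0 subr0 in H.
Qed.
End Q.
Lemma sum_ind (R : realType) d (c : R) (l : 'I_d) :
  \sum_(k < d) (k == l)%:R * c = c.
Proof.
rewrite (bigD1 l) //= big1 ?eqxx; first by rewrite mul1r addr0.
by move=> k /negbTE ->; rewrite mul0r.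
Qed.

Lemma dot_formula (R : realType) d (P : 'M[R]_d) (q : R) (g : 'I_d -> R)
  (hQ : forall k j, Qhit P k j = if k == j then 1 else q) j v :
  dotR (gvec P g j) v = ln (1 + q * g j) * \sum_(k < d) v k +
     (ln (1 + g j) - ln (1 + q * g j)) * v j.
Proof.
rewrite /dotR /gvec.
have E : forall k, ln (1 + Qhit P k j * g j) * v k =
   ln (1 + q * g j) * v k + (k == j)%:R * ((ln (1 + g j) - ln (1 + q * g j)) * v j).
  move=> k; rewrite hQ; case: (eqVneq k j) => [->|kj] /=; first by rewrite mul1r; ring.
  by rewrite mul0r addr0.
by rewrite (eq_bigr _ (fun k _ => E k)) big_split /= sum_ind mulr_sumr.
Qed.

Theorem proposition3p3 (R : realType) (d : nat) (lam mu : 'I_d -> R)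
  (P : 'M[R]_d) (p : R) :
  (2 <= d)%N ->
  (forall i, 0 <= lam i) -> (forall i, 0 < mu i) ->
  routing_matrix P ->
  hypA lam mu P -> hypB lam mu P ->
  (forall i j : 'I_d, i != j -> P i j = p) ->
  p < ((d - 1)%:R)^-1 ->
  let q := p / (1 - (d - 2)%:R * p) in
  forall gamma : 'I_d -> R,
    GammaSet P gamma <-> ((forall i, 0 < gamma i) /\ SigmaF q gamma < 1).
Proof.
move=> d2 _ _ [Pge0 [P0 _]] _ _ Pp pd q g.
have d1 : (0 < d)%N by apply: leq_trans d2.
pose i0 : 'I_d := Ordinal d1.
pose i1 : 'I_d := Ordinal d2.
have p0 : 0 <= p by rewrite -(Pp i0 i1) //.
have e1 : (d - 1)%:R = d%:R - 1 :> R by rewrite natrB // ltnW.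
have e2 : (d - 2)%:R = d%:R - 2 :> R by rewrite natrB.
have D1 : 0 < d%:R - 1 :> R.
  have : (1%:R : R) < d%:R by rewrite ltr_nat.
  by rewrite subr_gt0.
have pd' : p * (d%:R - 1) < 1.
  by rewrite -ltr_pdivlMr // mul1r -e1.
have r1 : (d - 2)%:R * p < 1 by rewrite e2; nra.
have r0 : 0 < 1 - (d - 2)%:R * p by lra.
have q0 : 0 <= q by rewrite /q divr_ge0 // ltW.
have q1 : q < 1 by rewrite /q ltr_pdivrMr // mul1r e2; nra.
have hQ : forall k j, Qhit P k j = if k == j then 1 else q.
  by move=> k j; rewrite (@Qhit_formula R d P p d2 P0 Pp r1 p0).
pose b j := ln (1 + q * g j).
pose c j := ln (1 + g j) - ln (1 + q * g j).
have dotE : forall j v, dotR (gvec P g j) v = b j * \sum_(k < d) v k + c j * v j.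
  by move=> j v; rewrite (@dot_formula R d P q g hQ).
have b0 : forall j, 0 <= g j -> 0 <= b j.
  move=> j gj; apply: ln_ge0; rewrite lerDl; exact: mulr_ge0.
have c0 : forall j, 0 < g j -> 0 < c j.
  move=> j gj; rewrite /c subr_gt0 ltr_ln ?posrE; [nra|nra|lra].
have argm : forall g0 : (forall k, 0 <= g k), exists i, b i = \big[Num.max/0]_(j < d) b j.
  move=> g0; have [i _ ->] := @Order.TotalTheory.eq_bigmax _ _ _ 0 i0 predT b isT (fun j _ => b0 j (g0 j)).
  by exists i.
split.
- move=> [g0 Hg].
  have gpos : forall k, 0 < g k.
    move=> k; rewrite lt_neqAle g0 andbT; apply/negP => /eqP gk.
    have [i ik bi] : exists2 i, i != k & forall j, b j <= b i.
      have [i0' bi0] := argm g0.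
      have bmax : forall j, b j <= b i0' by move=> j; rewrite bi0; exact: le_bigmax.
      case: (eqVneq i0' k) => [ek|nk]; last by exists i0'.
      have bk : b k = 0 by rewrite /b -gk mulr0 addr0 ln1.
      have ok : exists2 i, i != k & True.
        case: (eqVneq k i0) => [->|nk0]; first by exists i1.
        by exists i0; rewrite // eq_sym.
      case: ok => i ik _; exists i => // j.
      by apply: (le_trans (bmax j)); rewrite ek bk; apply: b0.
    pose v (l : 'I_d) : R := (l == k)%:R.
    have S1 : \sum_(l < d) v l = 1 by rewrite /v -[RHS](@sum_ind R d 1 k); apply: eq_bigr => l _; rewrite mulr1.
    have : dotR (gvec P g i) v < \big[Num.max/0]_(j < d) dotR (gvec P g j) v.
      apply: Hg.
      + by move=> l; rewrite /v ler0n.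
      + by exists k; rewrite /v eqxx oner_neq0.
      + by rewrite /v (negbTE ik).
    apply/negP; rewrite -leNgt dotE S1 /v (negbTE ik) mulr0 addr0 mulr1.
    apply: bigmax_le => [|j _]; first exact: b0.
    rewrite dotE S1 mulr1.
    case: (eqVneq j k) => [->|jk]; last by rewrite mulr0 addr0.
    have ck : c k = 0 by rewrite /c /= -gk mulr0 subrr.
    by rewrite ck mul0r addr0.
  split => //.
  have [i bi] := argm g0.
  have bmax : forall j, b j <= b i by move=> j; rewrite bi; exact: le_bigmax.
  pose v (l : 'I_d) : R := (b i - b l) / c l.
  have SigE : SigmaF q g = \sum_(l < d) v l.
    by rewrite /SigmaF -/b; apply: eq_bigr => l _; rewrite /v bi.
  rewrite SigE ltNge; apply/negP => HS.
  have v0 : forall l, 0 <= v l.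
    move=> l; apply: divr_ge0; [rewrite subr_ge0; exact: bmax | exact/ltW/c0/gpos].
  have : dotR (gvec P g i) v < \big[Num.max/0]_(j < d) dotR (gvec P g j) v.
    apply: Hg => //.
    + case/boolP: [exists l, v l != 0] => [/existsP//|/existsPn H].
      move: HS; rewrite big1 ?ler10 // => l _; exact/eqP/negPn/H.
    + by rewrite /v subrr mul0r.
  have vi : v i = 0 by rewrite /v subrr mul0r.
  apply/negP; rewrite -leNgt dotE vi mulr0 addr0.
  apply: bigmax_le => [|j _]; first by apply: mulr_ge0; [exact: b0|exact: le_trans HS].
  have e : c j * v j = b i - b j.
    by rewrite /v mulrC divfK // gt_eqF // (c0 _ (gpos j)).
  rewrite dotE e; have := bmax j; nra.
- move=> [gpos HS]; have g0 : forall k, 0 <= g k by move=> k; exact/ltW.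
  split => // i v vge [k vk] vi.
  have vkp : 0 < v k by rewrite lt_neqAle eq_sym vk vge.
  set S := \sum_(l < d) v l.
  have Spos : 0 < S.
    rewrite /S (bigD1 k) //=.
    have : 0 <= \sum_(l < d | l != k) v l by apply: sumr_ge0 => l _; exact: vge.
    lra.
  set B := \big[Num.max/0]_(j < d) b j.
  have biB : b i <= B by exact: le_bigmax.
  rewrite ltNge; apply/negP => Hle.
  have hj : forall j, v j <= (B - b j) / c j * S.
    move=> j.
    have hm : dotR (gvec P g j) v <= \big[Num.max/0]_(j < d) dotR (gvec P g j) v.
      exact: le_bigmax.
    have := le_trans hm Hle.
    rewrite !dotE vi mulr0 addr0 -/S => h.
    rewrite mulrAC ler_pdivlMr; last exact: c0.
    nra.
  have : S <= SigmaF q g * S.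
    rewrite /SigmaF mulr_suml /S; apply: ler_sum => j _; exact: hj.
  rewrite -ler_pdivrMr // divff ?gt_eqF //; lra.
Qed.
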